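(* Let $0\le\alpha<1$ and let $v$ be a $C^\infty$ real function such that $v(\varphi)>0$ and $v'(\varphi)>0$ for all $\varphi$ larger than some $\varphi_0$, and such that $(\log\sqrt{v(\varphi)})'\to\alpha$ as $\varphi\to\infty$. Let $h_{\mathrm s}$ be the separatrix solution of $h'=\sqrt{h^2-v}$. Then $$h_{\mathrm s}(\varphi)\sim\frac{\sqrt{v(\varphi)}}{\sqrt{1-\alpha^2}},\qquad\varphi\to\infty.$$
   Context: Take $\varphi_0$ such that $(\log\sqrt v)'<1$ on $(\varphi_0,\infty)$. A solution of $h'=\sqrt{h^2-v}$ in $R_0=\{(\varphi,h):\varphi\ge\varphi_0,\ h>\sqrt{v(\varphi)}\}$ is of type A if it reaches the curve $h=\sqrt{v(\varphi)}$ at a finite $\varphi$, and of type B if it remains in $R_0$ for all $\varphi>\varphi_0$. For such $v$ both types occur, there is $r<\infty$ such that solutions with $h(\varphi_0)<r$ are of type A and those with $h(\varphi_0)>r$ are of type B, and the separatrix $h_{\mathrm s}$ is the solution with $h_{\mathrm s}(\varphi_0)=r$; it is defined for all $\varphi\ge\varphi_0$ and $h_{\mathrm s}/\sqrt v$ is bounded there. *)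

(* Defs.v *)
From Stdlib Require Import Reals.
From Coquelicot Require Import Coquelicot.
Open Scope R_scope.

Definition smooth (v : R -> R) : Prop :=
  forall (n : nat) (x : R), ex_derive_n v n x.

Definition typeA (v : R -> R) (phi0 c : R) : Prop :=
  exists (phi1 : R) (h : R -> R),
    phi0 < phi1 /\ h phi0 = c /\
    filterlim h (at_right phi0) (locally (h phi0)) /\
    filterlim h (at_left phi1) (locally (h phi1)) /\
    (forall phi, phi0 <= phi < phi1 -> h phi > sqrt (v phi)) /\
    (forall phi, phi0 < phi < phi1 ->
        is_derive h phi (sqrt (h phi ^ 2 - v phi))) /\
    h phi1 = sqrt (v phi1).

Definition global_sol (v : R -> R) (phi0 : R) (h : R -> R) : Prop :=
  filterlim h (at_right phi0) (locally (h phi0)) /\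
  (forall phi, phi0 <= phi -> h phi > sqrt (v phi)) /\
  (forall phi, phi0 < phi -> is_derive h phi (sqrt (h phi ^ 2 - v phi))).

Definition typeB (v : R -> R) (phi0 c : R) : Prop :=
  exists h : R -> R, h phi0 = c /\ global_sol v phi0 h.

Definition separatrix (v : R -> R) (phi0 : R) (hs : R -> R) : Prop :=
  global_sol v phi0 hs /\
  (forall c, sqrt (v phi0) < c < hs phi0 -> typeA v phi0 c) /\
  (forall c, hs phi0 < c -> typeB v phi0 c).

(* Main.v *)
Require Import Defs.
From Stdlib Require Import Reals Lra.
From Coquelicot Require Import Coquelicot.
Open Scope R_scope.

Definition cont (f : R -> R) x := forall eps, 0 < eps -> exists d, 0 < d /\
  forall y, Rabs (y - x) < d -> Rabs (f y - f x) < eps.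
Definition rc (f : R -> R) a := forall eps, 0 < eps -> exists d, 0 < d /\
  forall y, a <= y < a + d -> Rabs (f y - f a) < eps.
Definition lc (f : R -> R) a := forall eps, 0 < eps -> exists d, 0 < d /\
  forall y, a - d < y <= a -> Rabs (f y - f a) < eps.

Lemma cont_pt f x : cont f x <-> continuity_pt f x.
Proof. split.
- intros H eps Heps. destruct (H eps Heps) as [d [Hd H1]]. exists d; split; auto.
  intros y [_ Hy]. apply H1. exact Hy.
- intros H eps Heps. destruct (H eps Heps) as [d [Hd H1]]. exists d; split; auto.
  intros y Hy. destruct (Req_dec y x). subst. unfold Rminus. rewrite Rplus_opp_r, Rabs_R0; lra.
  apply H1. split. split. exact I. auto. exact Hy. Qed.

Lemma cont_rc f x : cont f x -> rc f x.
Proof. intros H eps He. destruct (H eps He) as [d [Hd H1]]. exists d; split; auto.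
 intros y Hy; apply H1. apply Rabs_def1; lra. Qed.
Lemma cont_lc f x : cont f x -> lc f x.
Proof. intros H eps He. destruct (H eps He) as [d [Hd H1]]. exists d; split; auto.
 intros y Hy; apply H1. apply Rabs_def1; lra. Qed.

Lemma rc_comb f g p q a : rc f a -> rc g a -> rc (fun x => p * f x + q * g x) a.
Proof. intros Hf Hg eps He.
 destruct (Hf (eps / (3 * (Rabs p + 1)))) as [d1 [Hd1 H1]].
 { apply Rdiv_lt_0_compat; try lra. pose proof (Rabs_pos p); lra. }
 destruct (Hg (eps / (3 * (Rabs q + 1)))) as [d2 [Hd2 H2]].
 { apply Rdiv_lt_0_compat; try lra. pose proof (Rabs_pos q); lra. }
 exists (Rmin d1 d2); split. apply Rmin_glb_lt; auto.
 intros y Hy. pose proof (Rmin_l d1 d2). pose proof (Rmin_r d1 d2).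
 specialize (H1 y ltac:(lra)). specialize (H2 y ltac:(lra)).
 replace (p * f y + q * g y - (p * f a + q * g a)) with (p * (f y - f a) + q * (g y - g a)) by ring.
 eapply Rle_lt_trans. apply Rabs_triang. rewrite !Rabs_mult.
 pose proof (Rabs_pos p). pose proof (Rabs_pos q).
 assert (H5 : Rabs p * Rabs (f y - f a) <= (Rabs p + 1) * (eps / (3 * (Rabs p + 1)))) by
   (apply Rmult_le_compat; try lra; apply Rabs_pos || lra).
 assert (H6 : Rabs q * Rabs (g y - g a) <= (Rabs q + 1) * (eps / (3 * (Rabs q + 1)))) by
   (apply Rmult_le_compat; try lra; apply Rabs_pos || lra).
 replace ((Rabs p + 1) * (eps / (3 * (Rabs p + 1)))) with (eps/3) in H5 by (field; lra).
 replace ((Rabs q + 1) * (eps / (3 * (Rabs q + 1)))) with (eps/3) in H6 by (field; lra).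
 lra. Qed.

Lemma lc_comb f g p q a : lc f a -> lc g a -> lc (fun x => p * f x + q * g x) a.
Proof. intros Hf Hg eps He.
 destruct (Hf (eps / (3 * (Rabs p + 1)))) as [d1 [Hd1 H1]].
 { apply Rdiv_lt_0_compat; try lra. pose proof (Rabs_pos p); lra. }
 destruct (Hg (eps / (3 * (Rabs q + 1)))) as [d2 [Hd2 H2]].
 { apply Rdiv_lt_0_compat; try lra. pose proof (Rabs_pos q); lra. }
 exists (Rmin d1 d2); split. apply Rmin_glb_lt; auto.
 intros y Hy. pose proof (Rmin_l d1 d2). pose proof (Rmin_r d1 d2).
 specialize (H1 y ltac:(lra)). specialize (H2 y ltac:(lra)).
 replace (p * f y + q * g y - (p * f a + q * g a)) with (p * (f y - f a) + q * (g y - g a)) by ring.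
 eapply Rle_lt_trans. apply Rabs_triang. rewrite !Rabs_mult.
 pose proof (Rabs_pos p). pose proof (Rabs_pos q).
 assert (H5 : Rabs p * Rabs (f y - f a) <= (Rabs p + 1) * (eps / (3 * (Rabs p + 1)))) by
   (apply Rmult_le_compat; try lra; apply Rabs_pos || lra).
 assert (H6 : Rabs q * Rabs (g y - g a) <= (Rabs q + 1) * (eps / (3 * (Rabs q + 1)))) by
   (apply Rmult_le_compat; try lra; apply Rabs_pos || lra).
 replace ((Rabs p + 1) * (eps / (3 * (Rabs p + 1)))) with (eps/3) in H5 by (field; lra).
 replace ((Rabs q + 1) * (eps / (3 * (Rabs q + 1)))) with (eps/3) in H6 by (field; lra).
 lra. Qed.

Lemma rc_ext f g a : (forall x, f x = g x) -> rc f a -> rc g a.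
Proof. intros E H eps He. destruct (H eps He) as [d [Hd H1]]. exists d; split; auto.
 intros; rewrite <- !E; auto. Qed.
Lemma lc_ext f g a : (forall x, f x = g x) -> lc f a -> lc g a.
Proof. intros E H eps He. destruct (H eps He) as [d [Hd H1]]. exists d; split; auto.
 intros; rewrite <- !E; auto. Qed.

Lemma derive_cont f x d : is_derive f x d -> cont f x.
Proof. intros H. assert (Hc : continuous f x) by (apply ex_derive_continuous; exists d; exact H).
 intros eps He. destruct (proj1 (filterlim_locally f (f x)) Hc (mkposreal eps He)) as [del Hdel].
 exists del; split. apply cond_pos. intros y Hy. apply (Hdel y). exact Hy. Qed.

Lemma rc_of_filterlim f a : filterlim f (at_right a) (locally (f a)) -> rc f a.
Proof. intros Hc eps He. destruct (proj1 (filterlim_locally f (f a)) Hc (mkposreal eps He)) as [del Hdel].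
 exists del; split. apply cond_pos. intros y Hy.
 destruct (Req_dec y a). subst. unfold Rminus. rewrite Rplus_opp_r, Rabs_R0; lra.
 apply (Hdel y). change (Rabs (y - a) < del). apply Rabs_def1; lra. lra. Qed.
Lemma lc_of_filterlim f a : filterlim f (at_left a) (locally (f a)) -> lc f a.
Proof. intros Hc eps He. destruct (proj1 (filterlim_locally f (f a)) Hc (mkposreal eps He)) as [del Hdel].
 exists del; split. apply cond_pos. intros y Hy.
 destruct (Req_dec y a). subst. unfold Rminus. rewrite Rplus_opp_r, Rabs_R0; lra.
 apply (Hdel y). change (Rabs (y - a) < del). apply Rabs_def1; lra. lra. Qed.

Lemma cmp (f : R -> R) a b : a < b -> 0 < f a -> rc f a ->
  (forall x, a < x < b -> exists d, is_derive f x d /\ (f x = 0 -> 0 < d)) ->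
  forall x, a <= x < b -> 0 < f x.
Proof.
 intros Hab Hfa Hrc Hd x0 Hx0. destruct (Rlt_or_le 0 (f x0)) as [Hp|Hn]; auto. exfalso.
 assert (Ha0 : a < x0). { destruct (Req_dec a x0). subst; lra. lra. }
 set (S := fun t => a <= t <= x0 /\ forall s, a <= s <= t -> 0 < f s).
 destruct (completeness S) as [T [HT1 HT2]].
 { exists x0. intros t [Ht _]. lra. }
 { exists a. split. lra. intros s Hs. replace s with a by lra. auto. }
 assert (aT : a <= T). { apply HT1. split. lra. intros s Hs. replace s with a by lra. auto. }
 assert (Tx : T <= x0). { apply HT2. intros t [Ht _]. lra. }
 assert (P1 : forall s, a <= s < T -> 0 < f s).
 { intros s Hs. destruct (Rlt_or_le 0 (f s)) as [|Hs2]; auto. exfalso.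
   assert (T <= s). { apply HT2. intros t [Ht Ht2]. destruct (Rle_or_lt t s); auto.
     specialize (Ht2 s ltac:(lra)). lra. } lra. }
 destruct (Req_dec a T) as [EaT|NaT].
 - subst T. destruct (Hrc (f a) Hfa) as [d [Hd0 H1]].
   assert (S (Rmin (a + d/2) x0)).
   { split. split. apply Rmin_glb; lra. apply Rmin_r.
     intros s Hs. pose proof (Rmin_l (a+d/2) x0). specialize (H1 s ltac:(lra)).
     apply Rabs_def2 in H1. lra. }
   specialize (HT1 _ H). unfold Rmin in HT1. destruct (Rle_dec (a + d/2) x0); lra.
 - assert (aT' : a < T) by lra.
   destruct (Hd T ltac:(lra)) as [d [HdT Hz]].
   pose proof (derive_cont _ _ _ HdT) as HcT.
   destruct (Rtotal_order (f T) 0) as [Hlt|[Heq|Hgt]].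
   + destruct (HcT (- f T) ltac:(lra)) as [d1 [Hd1 H1]].
     set (s := Rmax a (T - d1/2)).
     assert (a <= s) by apply Rmax_l. assert (T - d1/2 <= s) by apply Rmax_r.
     assert (s < T). { unfold s, Rmax. destruct (Rle_dec a (T - d1/2)); lra. }
     specialize (P1 s ltac:(lra)). specialize (H1 s ltac:(apply Rabs_def1; lra)).
     apply Rabs_def2 in H1. lra.
   + specialize (Hz Heq). apply is_derive_Reals in HdT.
     destruct (HdT (d/2) ltac:(lra)) as [del Hdel].
     set (h := - Rmin (del/2) ((T - a)/2)).
     pose proof (cond_pos del).
     assert (h < 0). { unfold h, Rmin. destruct (Rle_dec (del/2) ((T-a)/2)); lra. }
     assert (- h <= del/2) by (unfold h; pose proof (Rmin_l (del/2) ((T-a)/2)); lra).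
     assert (- h <= (T-a)/2) by (unfold h; pose proof (Rmin_r (del/2) ((T-a)/2)); lra).
     specialize (Hdel h ltac:(lra) ltac:(apply Rabs_def1; lra)).
     specialize (P1 (T + h) ltac:(lra)).
     rewrite Heq in Hdel. apply Rabs_def2 in Hdel.
     assert (/ h < 0) by (apply Rinv_lt_0_compat; lra).
     assert (f (T+h) * / h < 0) by nra.
     unfold Rdiv in Hdel. rewrite Rminus_0_r in Hdel. lra.
   + assert (TX : T < x0). { destruct (Req_dec T x0). subst. lra. lra. }
     destruct (HcT (f T) Hgt) as [d1 [Hd1 H1]].
     assert (S (Rmin (T + d1/2) x0)).
     { split. split. apply Rmin_glb; lra. apply Rmin_r.
       intros s Hs. pose proof (Rmin_l (T+d1/2) x0).
       destruct (Rlt_or_le s T). apply P1; lra.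
       specialize (H1 s ltac:(apply Rabs_def1; lra)). apply Rabs_def2 in H1. lra. }
     specialize (HT1 _ H). unfold Rmin in HT1. destruct (Rle_dec (T + d1/2) x0); lra.
Qed.

Lemma cmp_end f a b : a < b -> (forall x, a <= x < b -> 0 < f x) -> lc f b -> 0 <= f b.
Proof. intros Hab H Hl. destruct (Rle_or_lt 0 (f b)); auto. exfalso.
 destruct (Hl (- f b) ltac:(lra)) as [d [Hd H1]].
 set (s := Rmax a (b - d/2)).
 assert (a <= s) by apply Rmax_l. assert (b - d/2 <= s) by apply Rmax_r.
 assert (s < b). { unfold s, Rmax. destruct (Rle_dec a (b - d/2)); lra. }
 specialize (H s ltac:(lra)). specialize (H1 s ltac:(lra)). apply Rabs_def2 in H1. lra. Qed.
Lemma sqrt_gap b W : 1 <= b <= W -> W - b <= sqrt (W^2-1) - sqrt (b^2-1).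
Proof. intros. 
assert (HA := sqrt_sqrt (W^2-1) ltac:(nra)).
assert (HB := sqrt_sqrt (b^2-1) ltac:(nra)).
assert (0 <= sqrt (b^2-1)) by apply sqrt_pos.
assert (sqrt (b^2-1) <= sqrt (W^2-1)) by (apply sqrt_le_1; nra).
assert (sqrt (W^2-1) <= W). { apply Rle_trans with (sqrt (W^2)); [apply sqrt_le_1; nra | rewrite sqrt_pow2; lra]. }
assert (sqrt (b^2-1) <= b). { apply Rle_trans with (sqrt (b^2)); [apply sqrt_le_1; nra | rewrite sqrt_pow2; lra]. }
set (A := sqrt (W^2-1)) in *. set (B := sqrt (b^2-1)) in *.
assert ((A-B)*(A+B) = (W-b)*(W+b)) by nra.
destruct (Req_dec (A+B) 0). nra.
nra. Qed.
Lemma sq_lip X y q : 0 <= y <= X -> q <= y^2 -> q < X^2 ->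
  sqrt (X^2-q) - sqrt (y^2-q) <= (X-y)*(2*X)/sqrt (X^2-q).
Proof. intros.
assert (HA := sqrt_sqrt (X^2-q) ltac:(nra)).
assert (HB := sqrt_sqrt (y^2-q) ltac:(nra)).
assert (0 < sqrt (X^2-q)) by (apply sqrt_lt_R0; nra).
assert (0 <= sqrt (y^2-q)) by apply sqrt_pos.
assert (sqrt (y^2-q) <= sqrt (X^2-q)) by (apply sqrt_le_1; nra).
set (A := sqrt (X^2-q)) in *. set (B := sqrt (y^2-q)) in *.
assert ((A-B)*A <= (X-y)*(2*X)) by nra.
apply Rmult_le_reg_r with A. lra. unfold Rdiv. rewrite Rmult_assoc, Rinv_l; lra. Qed.

Lemma dm f g x a b : is_derive f x a -> is_derive g x b -> is_derive (fun y => f y - g y) x (a - b).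
Proof. intros. exact (is_derive_minus f g x a b H H0). Qed.
Lemma dp f g x a b : is_derive f x a -> is_derive g x b -> is_derive (fun y => f y * g y) x (a * g x + f x * b).
Proof. intros. eapply is_derive_ext. 2: exact (is_derive_mult f g x a b H H0 (fun n m => Rmult_comm n m)). intros. reflexivity. Qed.
Lemma dext (f : R -> R) (x a b : R) : is_derive f x a -> a = b -> is_derive f x b.
Proof. intros; subst; auto. Qed.

Definition L (v : R -> R) x := Derive (fun y => ln (sqrt (v y))) x.

Lemma u_deriv (v : R -> R) (x : R) : ex_derive v x -> 0 < v x ->
  is_derive (fun y => sqrt (v y)) x (L v x * sqrt (v x)).
Proof. intros Hd Hv.
 assert (H1 : is_derive (fun y => ln (sqrt (v y))) x (Derive v x / (2 * v x))).
 { auto_derive. repeat split; auto. apply sqrt_lt_R0; auto.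
   assert (0 < sqrt (v x)) by (apply sqrt_lt_R0; auto).
   replace (2 * v x) with (2 * (sqrt (v x) * sqrt (v x))) by (rewrite sqrt_sqrt; lra). change (Derive (fun x0 => v x0) x) with (Derive v x). set (D := Derive v x) in *. set (s := sqrt (v x)) in *. field. lra. }
 assert (H2 : is_derive (fun y => sqrt (v y)) x (Derive v x / (2 * sqrt (v x)))).
 { auto_derive. repeat split; auto. assert (0 < sqrt (v x)) by (apply sqrt_lt_R0; auto). change (Derive (fun x0 => v x0) x) with (Derive v x). set (D := Derive v x) in *. set (s := sqrt (v x)) in *. field. lra. }
 assert (HL : L v x = Derive v x / (2 * v x)) by (unfold L; apply is_derive_unique; exact H1).
 rewrite HL. eapply dext. exact H2.
 assert (0 < sqrt (v x)) by (apply sqrt_lt_R0; auto).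
 replace (Derive v x / (2 * v x)) with (Derive v x / (2 * (sqrt (v x) * sqrt (v x)))) by (rewrite sqrt_sqrt; lra). set (D := Derive v x) in *. set (s := sqrt (v x)) in *. field. lra. Qed.

Lemma sqrt_scale b u : 1 <= b -> 0 < u -> sqrt ((b * u)^2 - u^2) = sqrt (b^2-1) * u.
Proof. intros. replace ((b*u)^2 - u^2) with ((b^2-1) * u^2) by ring.
 rewrite sqrt_mult_alt by nra. rewrite sqrt_pow2; lra. Qed.

Lemma lower (v hs : R -> R) phi0 W alpha M :
 (forall x, phi0 <= x -> 0 < v x) ->
 (forall x, ex_derive v x) ->
 (forall phi, phi0 <= phi -> hs phi > sqrt (v phi)) ->
 (forall phi, phi0 < phi -> is_derive hs phi (sqrt (hs phi ^ 2 - v phi))) ->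
 1 < W -> 0 < W*alpha - sqrt(W^2-1) ->
 (forall x, M < x -> alpha - (W*alpha - sqrt(W^2-1))/(2*W) < L v x < 1) ->
 forall x1, phi0 < x1 -> M < x1 -> W * sqrt (v x1) <= hs x1.
Proof.
 intros Hv Hd Hgt Hder HW Hc0 HL x1 Hx1 HM.
 destruct (Rle_or_lt (W * sqrt (v x1)) (hs x1)) as [|Hlt]; auto. exfalso.
 set (c0 := W*alpha - sqrt(W^2-1)) in *.
 set (mu := c0/4).
 assert (Hmu : 0 < mu) by (unfold mu; lra).
 set (x2 := x1 + (W-1)/mu).
 assert (Hx12 : x1 < x2). { unfold x2. assert (0 < (W-1)/mu) by (apply Rdiv_lt_0_compat; lra). lra. }
 set (f := fun x => (W - mu*(x-x1)) * sqrt (v x) - hs x).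
 assert (Hfd : forall x, phi0 < x -> is_derive f x
    ((-mu) * sqrt (v x) + (W - mu*(x-x1)) * (L v x * sqrt (v x)) - sqrt (hs x ^ 2 - v x))).
 { intros x Hx. unfold f. apply (dm (fun y => (W - mu*(y-x1)) * sqrt (v y)) hs); [|apply Hder; auto].
   apply (dp (fun y => W - mu*(y-x1)) (fun y => sqrt (v y))). auto_derive. auto. ring. apply u_deriv; auto. apply Hv; lra. }
 assert (Hpos : forall x, x1 <= x < x2 -> 0 < f x).
 { apply cmp. auto. unfold f. lra.
   apply cont_rc. eapply derive_cont. apply Hfd. lra.
   intros x Hx. eexists. split. apply Hfd. lra. intros Hf0.
   set (b := W - mu*(x-x1)) in *.
   assert (Hb1 : 1 < b). { unfold b. assert (mu * (x - x1) < mu * ((W-1)/mu)).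
       apply Rmult_lt_compat_l; unfold x2 in Hx; lra.
       replace (mu * ((W-1)/mu)) with (W-1) in H by (field; lra). lra. }
   assert (HbW : b <= W). { unfold b. assert (0 <= mu * (x-x1)) by (apply Rmult_le_pos; lra). lra. }
   assert (Hu : 0 < sqrt (v x)) by (apply sqrt_lt_R0; apply Hv; lra).
   assert (Hhs : hs x = b * sqrt (v x)) by (unfold f in Hf0; cbv beta in Hf0; unfold b; lra).
   rewrite Hhs. replace ((b * sqrt (v x)) ^ 2 - v x) with ((b * sqrt (v x)) ^ 2 - sqrt (v x) ^ 2) by (rewrite pow2_sqrt; auto; apply Rlt_le, Hv; lra).
   rewrite sqrt_scale by lra.
   pose proof (sqrt_gap b W ltac:(lra)).
   destruct (HL x ltac:(lra)) as [HL1 HL2].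
   assert (W * (c0 / (2*W)) = c0/2) by (field; lra).
   assert (0 < b * L v x - sqrt (b^2-1) - mu).
   { assert (0 <= (W-b)*(1 - L v x)) by (apply Rmult_le_pos; lra).
     assert (W * (alpha - c0/(2*W)) < W * L v x) by (apply Rmult_lt_compat_l; lra).
     unfold mu, c0 in *. nra. }
   nra. }
 assert (Hend : 0 <= f x2).
 { apply (cmp_end f x1 x2); auto. apply cont_lc. eapply derive_cont. apply Hfd. lra. }
 unfold f in Hend. replace (W - mu * (x2 - x1)) with 1 in Hend by (unfold x2; field; lra).
 specialize (Hgt x2 ltac:(lra)). lra.
Qed.

Lemma cont_H (g : R -> R) a : rc g a -> (forall x, a < x -> cont g x) ->
  forall x, cont (fun y => g (Rmax y a)) x.
Proof. intros Hr Hc x eps He.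
 destruct (Rtotal_order x a) as [Hl|[Heq|Hg]].
 - exists (a - x). split. lra. intros y Hy. apply Rabs_def2 in Hy.
   rewrite !Rmax_right by lra. unfold Rminus. rewrite Rplus_opp_r, Rabs_R0; lra.
 - subst x. destruct (Hr eps He) as [d [Hd H1]]. exists d; split; auto.
   intros y Hy. apply Rabs_def2 in Hy. rewrite (Rmax_right a a) by lra.
   destruct (Rle_or_lt a y).
   + rewrite Rmax_left by lra. apply H1. lra.
   + rewrite Rmax_right by lra. unfold Rminus. rewrite Rplus_opp_r, Rabs_R0; lra.
 - destruct (Hc x Hg eps He) as [d [Hd H1]]. exists (Rmin d (x - a)). split.
   apply Rmin_glb_lt; lra. intros y Hy. pose proof (Rmin_l d (x-a)). pose proof (Rmin_r d (x-a)).
   apply Rabs_def2 in Hy. rewrite !Rmax_left by lra. apply H1. apply Rabs_def1; lra.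
Qed.

Lemma exp_le_mono x y : x <= y -> exp x <= exp y.
Proof. intros [H|H]. left; apply exp_increasing; auto. subst; lra. Qed.

Lemma cpt_div (F G : R -> R) x : continuity_pt F x -> continuity_pt G x -> G x <> 0 ->
  continuity_pt (fun y => F y / G y) x.
Proof. intros. exact (continuity_pt_div F G x H H0 H1). Qed.
Lemma cpt_minus (F G : R -> R) x : continuity_pt F x -> continuity_pt G x ->
  continuity_pt (fun y => F y - G y) x.
Proof. intros. exact (continuity_pt_minus F G x H H0). Qed.
Lemma cpt_mult (F G : R -> R) x : continuity_pt F x -> continuity_pt G x ->
  continuity_pt (fun y => F y * G y) x.
Proof. intros. exact (continuity_pt_mult F G x H H0). Qed.
Lemma cpt_sqrt (F : R -> R) x : continuity_pt F x -> 0 <= F x ->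
  continuity_pt (fun y => sqrt (F y)) x.
Proof. intros. exact (continuity_pt_comp F sqrt x H (continuity_pt_sqrt _ H0)). Qed.
Lemma cpt_const c x : continuity_pt (fun _ => c) x.
Proof. apply continuity_pt_const. intros a b; reflexivity. Qed.

Lemma upper (v hs : R -> R) phi0 Wm alpha M :
 (forall x, phi0 <= x -> 0 < v x) ->
 (forall x, ex_derive v x) ->
 separatrix v phi0 hs ->
 1 < Wm -> 0 < sqrt(Wm^2-1) - Wm*alpha ->
 (forall x, M < x -> L v x < alpha + (sqrt(Wm^2-1) - Wm*alpha)/(2*Wm)) ->
 forall x1, phi0 < x1 -> M < x1 -> hs x1 <= Wm * sqrt (v x1).
Proof.
 intros Hv Hd [[Hrc [Hgt Hder]] [HA HB]] HW Hc1 HL x1 Hx1 HM.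
 destruct (Rle_or_lt (hs x1) (Wm * sqrt (v x1))) as [|Hlt]; auto. exfalso.
 set (gap := hs x1 - Wm * sqrt (v x1)).
 assert (Hgap : 0 < gap) by (unfold gap; lra).
 assert (Hrs : rc hs phi0) by (apply rc_of_filterlim; auto).
 assert (Hcs : forall x, phi0 < x -> cont hs x) by (intros; eapply derive_cont; apply Hder; auto).
 set (H := fun y => hs (Rmax y phi0)).
 assert (HcH : forall x, continuity_pt H x) by (intros; apply cont_pt; apply cont_H; auto).
 assert (HH : forall x, phi0 <= x -> H x = hs x) by (intros; unfold H; rewrite Rmax_left; lra).
 assert (Hcv : forall x, continuity_pt v x) by (intros; apply cont_pt; destruct (Hd x) as [dv Hdv]; eapply derive_cont; exact Hdv).
 destruct (continuity_ab_min (fun x => H x - sqrt (v x)) phi0 x1) as [mx [Hmx1 Hmx2]]. lra.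
 { intros c Hc. apply cpt_minus; auto. apply cpt_sqrt; auto. apply Rlt_le, Hv; lra. }
 set (delta := H mx - sqrt (v mx)) in *.
 assert (Hdel : 0 < delta). { unfold delta. rewrite HH by lra. specialize (Hgt mx ltac:(lra)). lra. }
 assert (Hdel2 : forall x, phi0 <= x <= x1 -> delta <= hs x - sqrt (v x)).
 { intros x Hx. rewrite <- HH by lra. apply (Hmx1 x Hx). }
 assert (Hsq : forall x, phi0 <= x -> 0 < hs x ^ 2 - v x).
 { intros x Hx. specialize (Hgt x Hx). pose proof (sqrt_pos (v x)).
   pose proof (sqrt_sqrt (v x) ltac:(apply Rlt_le, Hv; lra)). nra. }
 destruct (continuity_ab_maj (fun x => 2 * H x / sqrt (H x ^ 2 - v x)) phi0 x1) as [Mx [HMx1 HMx2]]. lra.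
 { intros c Hc. apply cpt_div. apply cpt_mult; auto. apply cpt_const.
   apply cpt_sqrt. apply cpt_minus; auto. apply cpt_mult; auto. apply cpt_mult; auto. apply cpt_const.
   rewrite HH by lra. apply Rlt_le, Hsq; lra.
   rewrite HH by lra. apply Rgt_not_eq, sqrt_lt_R0, Hsq; lra. }
 set (K := Rmax (2 * H Mx / sqrt (H Mx ^ 2 - v Mx)) 1).
 assert (HK1 : 1 <= K) by apply Rmax_r.
 assert (HK : forall x, phi0 <= x <= x1 -> 2 * hs x / sqrt (hs x ^ 2 - v x) <= K).
 { intros x Hx. eapply Rle_trans; [|apply Rmax_l]. rewrite <- HH by lra. apply (HMx1 x Hx). }
 set (E := fun x => exp (2 * K * (x - phi0))).
 set (Emax := E x1).
 assert (HE1 : 1 <= Emax). { unfold Emax, E. rewrite <- exp_0. apply exp_le_mono. 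
    apply Rmult_le_pos; nra. }
 assert (HEpos : forall x, 0 < E x) by (intros; apply exp_pos).
 assert (HEle : forall x, x <= x1 -> E x <= Emax).
 { intros x Hx. unfold Emax, E. apply exp_le_mono. apply Rmult_le_compat_l; nra. }
 set (m := Rmin (delta/2) (gap/2)).
 assert (Hm : 0 < m) by (apply Rmin_glb_lt; lra).
 assert (Hm1 : m <= delta/2) by apply Rmin_l.
 assert (Hm2 : m <= gap/2) by apply Rmin_r.
 set (eta := m / Emax).
 assert (Heta : 0 < eta) by (apply Rdiv_lt_0_compat; lra).
 assert (HetaE : forall x, x <= x1 -> eta * E x <= m).
 { intros x Hx. unfold eta. apply Rle_trans with (m / Emax * Emax).
   apply Rmult_le_compat_l. apply Rlt_le, Rdiv_lt_0_compat; lra. auto. right; field; lra. }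
 assert (Heta1 : eta <= m).
 { unfold eta. apply Rle_trans with (m / 1). unfold Rdiv. apply Rmult_le_compat_l. lra.
   apply Rinv_le_contravar; lra. right; field. }
 set (c := hs phi0 - eta / 2).
 assert (Hc : sqrt (v phi0) < c < hs phi0).
 { unfold c. specialize (Hdel2 phi0 ltac:(lra)). lra. }
 destruct (HA c Hc) as [phi1 [h [Hp01 [Hh0 [Hhr [Hhl [Hhgt [Hhd Hh1]]]]]]]].
 set (f := fun x => h x - (hs x - eta * E x)).
 assert (HEd : forall x : R, is_derive E x (2 * K * E x)).
 { intros x. eapply dext. unfold E. auto_derive. auto. reflexivity. unfold E, Rminus. ring. }
 assert (Hfd : forall x, phi0 < x < phi1 -> is_derive f x
    (sqrt (h x ^ 2 - v x) - (sqrt (hs x ^ 2 - v x) - eta * (2 * K * E x)))).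
 { intros x Hx. unfold f. apply (dm h (fun y => hs y - eta * E y)). apply Hhd; auto.
   apply (dm hs (fun y => eta * E y)). apply Hder; lra.
   eapply dext. apply (dp (fun _ => eta) E). auto_derive; auto. apply HEd. ring. }
 set (b := Rmin x1 phi1).
 assert (Hb1 : b <= x1) by apply Rmin_l. assert (Hb2 : b <= phi1) by apply Rmin_r.
 assert (Hb0 : phi0 < b) by (apply Rmin_glb_lt; lra).
 assert (Hg1 : forall x, phi0 <= x <= x1 -> sqrt (v x) + delta/2 <= hs x - eta * E x).
 { intros x Hx. specialize (Hdel2 x Hx). specialize (HetaE x ltac:(lra)). lra. }
 assert (Hfpos : forall x, phi0 <= x < b -> 0 < f x).
 { apply cmp. auto. unfold f. rewrite Hh0. unfold c, E. rewrite Rminus_diag, Rmult_0_r, exp_0. lra.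
   eapply rc_ext. 2: apply (rc_comb h (fun y => hs y - eta * E y) 1 (-1)).
   intros; unfold f; ring. apply rc_of_filterlim; auto.
   eapply rc_ext. 2: apply (rc_comb hs E 1 (-eta)). intros; simpl; ring. auto.
   apply cont_rc. eapply derive_cont. apply HEd.
   intros x Hx. eexists. split. apply Hfd. lra. intros Hf0.
   assert (Hx' : phi0 <= x <= x1) by lra.
   set (g := hs x - eta * E x) in *.
   assert (Hhx : h x = g) by (unfold f in Hf0; cbv beta in Hf0; unfold g; lra).
   rewrite Hhx.
   specialize (Hg1 x Hx'). fold g in Hg1. specialize (Hgt x ltac:(lra)). specialize (HK x Hx').
   pose proof (sqrt_pos (v x)).
   pose proof (sqrt_sqrt (v x) ltac:(apply Rlt_le, Hv; lra)).
   assert (HeE : 0 < eta * E x) by (apply Rmult_lt_0_compat; auto).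
   assert (Hg0 : 0 <= g) by lra.
   assert (Hgh : g <= hs x) by (unfold g; lra).
   assert (Hvg : v x <= g ^ 2) by nra.
   assert (Hvh : v x < hs x ^ 2) by nra.
   assert (Hl := sq_lip (hs x) g (v x) (conj Hg0 Hgh) Hvg Hvh).
   assert (Hid : (hs x - g) * (2 * hs x) / sqrt (hs x ^ 2 - v x) = (eta * E x) * (2 * hs x / sqrt (hs x ^ 2 - v x))).
   { unfold g, Rdiv. ring. }
   rewrite Hid in Hl.
   assert ((eta * E x) * (2 * hs x / sqrt (hs x ^ 2 - v x)) <= (eta * E x) * K).
   { apply Rmult_le_compat_l; auto. pose proof (HEpos x); nra. }
   pose proof (HEpos x). nra. }
 destruct (Rle_or_lt phi1 x1) as [Hp1|Hp1].
 - assert (Hbe : b = phi1) by (unfold b; rewrite Rmin_right; lra).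
   rewrite Hbe in Hfpos.
   assert (Hend : 0 <= f phi1).
   { apply (cmp_end f phi0 phi1); auto.
     eapply lc_ext. 2: apply (lc_comb h (fun y => hs y - eta * E y) 1 (-1)).
     intros; unfold f; ring. apply lc_of_filterlim; auto.
     eapply lc_ext. 2: apply (lc_comb hs E 1 (-eta)). intros; simpl; ring.
     apply cont_lc. apply Hcs. lra.
     apply cont_lc. eapply derive_cont. apply HEd. }
   specialize (Hg1 phi1 ltac:(lra)). unfold f in Hend. 
   pose proof (sqrt_lt_R0 (v phi1) ltac:(apply Hv; lra)). lra.
 - assert (Hbe : b = x1) by (unfold b; rewrite Rmin_left; lra).
   rewrite Hbe in Hfpos.
   assert (Hend : 0 <= f x1).
   { apply (cmp_end f phi0 x1); auto.
     apply cont_lc. eapply derive_cont. apply Hfd. lra. }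
   assert (Hhx1 : Wm * sqrt (v x1) < h x1).
   { unfold f in Hend. specialize (HetaE x1 ltac:(lra)). unfold gap in Hm2. lra. }
   set (f2 := fun x => h x - Wm * sqrt (v x)).
   assert (Hf2d : forall x, phi0 < x < phi1 -> is_derive f2 x
      (sqrt (h x ^ 2 - v x) - Wm * (L v x * sqrt (v x)))).
   { intros x Hx. unfold f2. apply (dm h (fun y => Wm * sqrt (v y))). apply Hhd; auto.
     eapply dext. apply (dp (fun _ => Wm) (fun y => sqrt (v y))). auto_derive; auto.
     apply u_deriv; auto. apply Hv; lra. ring. }
   assert (Hf2pos : forall x, x1 <= x < phi1 -> 0 < f2 x).
   { apply cmp. auto. unfold f2; lra.
     apply cont_rc. eapply derive_cont. apply Hf2d. lra.
     intros x Hx. eexists. split. apply Hf2d. lra. intros Hf0.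
     assert (Hu : 0 < sqrt (v x)) by (apply sqrt_lt_R0; apply Hv; lra).
     assert (Hhx : h x = Wm * sqrt (v x)) by (unfold f2 in Hf0; cbv beta in Hf0; lra).
     rewrite Hhx. replace ((Wm * sqrt (v x)) ^ 2 - v x) with ((Wm * sqrt (v x)) ^ 2 - sqrt (v x) ^ 2) by (rewrite pow2_sqrt; auto; apply Rlt_le, Hv; lra).
     rewrite sqrt_scale by lra.
     specialize (HL x ltac:(lra)).
     set (c1 := sqrt (Wm ^ 2 - 1) - Wm * alpha) in *.
     assert (Wm * (c1 / (2*Wm)) = c1/2) by (field; lra).
     assert (Wm * L v x < Wm * (alpha + c1 / (2 * Wm))) by (apply Rmult_lt_compat_l; lra).
     assert (0 < sqrt (Wm ^ 2 - 1) - Wm * L v x) by (unfold c1 in *; nra).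
     nra. }
   assert (Hend2 : 0 <= f2 phi1).
   { apply (cmp_end f2 x1 phi1); auto.
     eapply lc_ext. 2: apply (lc_comb h (fun y => sqrt (v y)) 1 (-Wm)).
     intros; unfold f2; ring. apply lc_of_filterlim; auto.
     apply cont_lc. eapply derive_cont. apply u_deriv; auto. apply Hv; lra. }
   unfold f2 in Hend2. pose proof (sqrt_lt_R0 (v phi1) ltac:(apply Hv; lra)). nra.
Qed.

Theorem theorem3 (alpha : R) (v : R -> R) (phiv phi0 : R) (hs : R -> R) :
  0 <= alpha < 1 ->
  smooth v ->
  (forall phi, phiv < phi -> 0 < v phi /\ 0 < Derive v phi) ->
  is_lim (fun phi => Derive (fun x => ln (sqrt (v x))) phi) p_infty alpha ->
  phiv < phi0 ->
  (forall phi, phi0 < phi -> Derive (fun x => ln (sqrt (v x))) phi < 1) ->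
  separatrix v phi0 hs ->
  is_lim (fun phi => hs phi / (sqrt (v phi) / sqrt (1 - alpha ^ 2))) p_infty 1.
Proof.
 intros [Ha0 Ha1] Hsm Hpos Hlim Hvp0 Hl1 Hsep.
 assert (Hd : forall x, ex_derive v x) by (intros x; exact (Hsm 1%nat x)).
 assert (Hv : forall x, phi0 <= x -> 0 < v x) by (intros x Hx; apply Hpos; lra).
 assert (HlimL : forall e, 0 < e -> exists M, forall x, M < x -> Rabs (L v x - alpha) < e).
 { intros e He. apply is_lim_spec in Hlim. exact (Hlim (mkposreal e He)). }
 destruct Hsep as [Hglob HAB]. pose proof (conj Hglob HAB) as Hsep.
 destruct Hglob as [_ [Hgt Hder]].
 set (s := sqrt (1 - alpha ^ 2)).
 assert (Hs2 : s * s = 1 - alpha ^ 2) by (apply sqrt_sqrt; nra).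
 assert (Hs0 : 0 < s) by (apply sqrt_lt_R0; nra).
 assert (Hs1 : s <= 1). { unfold s. apply Rle_trans with (sqrt 1); [apply sqrt_le_1; nra | rewrite sqrt_1; lra]. }
 apply is_lim_spec. intros eps. simpl.
 set (e := Rmin eps 1).
 assert (He0 : 0 < e) by (apply Rmin_glb_lt; [apply cond_pos|lra]).
 assert (He1 : e <= 1) by apply Rmin_r.
 assert (Hee : e <= eps) by apply Rmin_l.
 set (Wm := (1 + e/2)/s).
 assert (HWms : Wm * s = 1 + e/2) by (unfold Wm; field; lra).
 assert (HWm1 : 1 < Wm) by nra.
 assert (Hc1 : 0 < sqrt (Wm^2-1) - Wm * alpha).
 { assert (Wm * alpha < sqrt (Wm^2-1)); [|lra].
   rewrite <- (sqrt_pow2 (Wm * alpha)) by nra. apply sqrt_lt_1. nra. nra. nra. }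
 destruct (HlimL ((sqrt (Wm^2-1) - Wm * alpha)/(2*Wm))) as [M2 HM2].
 { apply Rdiv_lt_0_compat; lra. }
 assert (Hup : forall x, Rmax M2 phi0 < x -> hs x <= Wm * sqrt (v x)).
 { intros x Hx. pose proof (Rmax_l M2 phi0). pose proof (Rmax_r M2 phi0).
   apply (upper v hs phi0 Wm alpha M2); auto; try lra.
   intros y Hy. specialize (HM2 y Hy). apply Rabs_def2 in HM2. lra. }
 set (W := (1 - e/2)/s).
 assert (HWs : W * s = 1 - e/2) by (unfold W; field; lra).
 assert (Hlow : exists M1, forall x, M1 < x -> W * sqrt (v x) <= hs x).
 { destruct (Rle_or_lt W 1) as [HW1|HW1].
   - exists phi0. intros x Hx. specialize (Hgt x ltac:(lra)).
     pose proof (sqrt_pos (v x)). assert (0 <= W) by nra. nra.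
   - assert (Hc0 : 0 < W * alpha - sqrt (W^2-1)).
     { assert (sqrt (W^2-1) < W * alpha); [|lra].
       rewrite <- (sqrt_pow2 (W * alpha)) by nra. apply sqrt_lt_1. nra. nra. nra. }
     destruct (HlimL ((W * alpha - sqrt (W^2-1))/(2*W))) as [M1 HM1].
     { apply Rdiv_lt_0_compat; lra. }
     exists (Rmax M1 phi0). intros x Hx. pose proof (Rmax_l M1 phi0). pose proof (Rmax_r M1 phi0).
     apply (lower v hs phi0 W alpha (Rmax M1 phi0) Hv Hd Hgt Hder HW1 Hc0); try lra.
     intros y Hy. specialize (HM1 y ltac:(lra)). apply Rabs_def2 in HM1. split. lra.
     apply Hl1. lra. }
 destruct Hlow as [M1 HM1].
 exists (Rmax (Rmax M1 M2) phi0). intros x Hx.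
 pose proof (Rmax_l (Rmax M1 M2) phi0). pose proof (Rmax_r (Rmax M1 M2) phi0).
 pose proof (Rmax_l M1 M2). pose proof (Rmax_r M1 M2).
 specialize (HM1 x ltac:(lra)). specialize (Hup x ltac:(apply Rmax_lub_lt; lra)).
 assert (Hu : 0 < sqrt (v x)) by (apply sqrt_lt_R0, Hv; lra).
 replace (hs x / (sqrt (v x) / s) - 1) with ((hs x * s - sqrt (v x)) / sqrt (v x))
   by (field; lra).
 unfold Rdiv. rewrite Rabs_mult, Rabs_inv, (Rabs_right (sqrt (v x))) by lra.
 apply Rmult_lt_reg_r with (sqrt (v x)). lra.
 rewrite Rmult_assoc, Rinv_l, Rmult_1_r by lra.
 assert (hs x * s <= (1 + e/2) * sqrt (v x)) by (rewrite <- HWms; nra).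
 assert ((1 - e/2) * sqrt (v x) <= hs x * s) by (rewrite <- HWs; nra).
 apply Rabs_def1; nra.
Qed.
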